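(* Let $G=\bigl((f_j)_{j=1}^n;(\mu^{R})_{\emptyset\ne R\subseteq[n]}\bigr)$ be an $n$-resource selection game with $f_1,\ldots,f_n$ continuous. Then $P_G\in D_G$ and $E_G(P_G)=h_G$; i.e., $P_G\in\arg\max_{S\in D_G}E_G(S)$ (so $P_G$ is the greatest element of this set of maximizers).
   Context: An $n$-resource selection game is $G=\bigl((f_j)_{j=1}^n;(\mu^{R})_{\emptyset\ne R\subseteq[n]}\bigr)$ with each $f_j:[0,\infty)\to\mathbb{R}$ nondecreasing and each $\mu^R\ge0$. Equalization: for nondecreasing $g_1,\ldots,g_m:[0,\infty)\to\mathbb{R}\cup\{\mathrm{undefined}\}$, $\mathrm{eq}(g_1,\ldots,g_m)(\mu)=g_1(\mu_1)$ if there exist $\mu_1,\ldots,\mu_m\ge0$ summing to $\mu$ with $g_1(\mu_1)=\cdots=g_m(\mu_m)\in\mathbb{R}$, else $\mathrm{undefined}$. For nonempty $S\subseteq[n]$: $E_G(S)=\mathrm{eq}(f_k:k\in S)\bigl(\sum_{\emptyset\ne R\subseteq S}\mu^R\bigr)$; $M_G(S)$ is the set of nonempty $S'\subseteq S$ such that for every $0\le\mu\le\sum_{R\subseteq S,\,R\cap S'\ne\emptyset}\mu^R$, $\mathrm{eq}(f_k:k\in S')(\mu)\ne E_G(S)$ ($\mathrm{undefined}$ differs from every real); $D_G=\{S: E_G(S)\in\mathbb{R},\ M_G(S)=\emptyset\}$; $h_G=\max_{S\in D_G}E_G(S)$; $P_G=\bigcup\{S\in D_G:E_G(S)=h_G\}$.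 *)

(* Defs.v *)
From mathcomp Require Import all_boot.
From Stdlib Require Import Reals.
Set Implicit Arguments.
Unset Strict Implicit.
Unset Printing Implicit Defensive.

Local Open Scope R_scope.

Section Game.
Variable n : nat.
(* cost functions f_j : [0,oo) -> R (only values on [0,oo) matter) *)
Variable f : 'I_n -> R -> R.
(* demands mu^R for nonempty R ⊆ [n] (value at set0 unused) *)
Variable mu : {set 'I_n} -> R.

(* eq(f_k : k in S)(m) is defined and equals c :
   there are m_k >= 0 (k in S) summing to m with f_k(m_k) = c for all k in S. *)
Definition EqVal (S : {set 'I_n}) (m c : R) : Prop :=
  exists x : 'I_n -> R,
    (forall k, k \in S -> 0 <= x k) /\
    \big[Rplus/0]_(k in S) x k = m /\
    (forall k, k \in S -> f k (x k) = c).

Definition demand (S : {set 'I_n}) : R :=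
  \big[Rplus/0]_(T : {set 'I_n} | (T != set0) && (T \subset S)) mu T.

Definition EG (S : {set 'I_n}) (c : R) : Prop := EqVal S (demand S) c.

Definition demand_meet (S S' : {set 'I_n}) : R :=
  \big[Rplus/0]_(T : {set 'I_n} | (T \subset S) && (T :&: S' != set0)) mu T.

Definition inM (S : {set 'I_n}) (c : R) (S' : {set 'I_n}) : Prop :=
  S' != set0 /\ S' \subset S /\
  forall m, 0 <= m <= demand_meet S S' -> ~ EqVal S' m c.

Definition inD (S : {set 'I_n}) : Prop :=
  S != set0 /\ exists c, EG S c /\ forall S', ~ inM S c S'.

Definition is_hG (h : R) : Prop :=
  (exists S, inD S /\ EG S h) /\
  (forall S c, inD S -> EG S c -> c <= h).

Definition is_PG (h : R) (P : {set 'I_n}) : Prop :=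
  forall j, j \in P <-> exists S, inD S /\ EG S h /\ j \in S.
End Game.

Definition nondecr_nonneg (g : R -> R) : Prop :=
  forall x y, 0 <= x -> x <= y -> g x <= g y.

Definition cont_nonneg (g : R -> R) : Prop :=
  forall x, 0 <= x -> forall eps, 0 < eps ->
    exists delta, 0 < delta /\
      forall y, 0 <= y -> Rabs (y - x) < delta -> Rabs (g y - g x) < eps.

(* Main.v *)
Require Import Defs.
From HB Require Import structures.
From mathcomp Require Import all_boot.
From Stdlib Require Import Reals Lra Classical ClassicalEpsilon.
Local Open Scope R_scope.


Lemma Rplus_assoc' : associative Rplus.
Proof. move=> x y z; rewrite Rplus_assoc; reflexivity. Qed.
Lemma Rplus_comm' : commutative Rplus.
Proof. move=> x y; apply Rplus_comm. Qed.
Lemma Rplus_0_l' : left_id 0 Rplus.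
Proof. move=> x; apply Rplus_0_l. Qed.
HB.instance Definition _ := Monoid.isComLaw.Build R 0 Rplus Rplus_assoc' Rplus_comm' Rplus_0_l'.

Lemma fchoice (A B : Type) (P : A -> B -> Prop) :
  (forall a, exists b, P a b) -> exists g, forall a, P a (g a).
Proof.
move=> H; exists (fun a => proj1_sig (constructive_indefinite_description _ (H a))).
move=> a; exact: (proj2_sig (constructive_indefinite_description _ (H a))).
Qed.

Lemma lub_approx E u : is_lub E u -> forall eps, 0 < eps -> exists e, E e /\ u - eps < e.
Proof.
move=> [Hub Hl] eps He; apply NNPP => Hn.
have : u <= u - eps.
  apply Hl => x Ex; apply Rnot_lt_le => Hx; apply Hn; exists x; split => //.
lra.
Qed.

Lemma lower_pt g a b t : nondecr_nonneg g -> cont_nonneg g -> 0 <= a -> a <= b ->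
  g a <= t -> t <= g b ->
  exists l, a <= l <= b /\ g l = t /\ forall x, a <= x < l -> g x < t.
Proof.
move=> Hm Hc Ha Hab Hga Hgb.
pose E := fun x => x = a \/ (a <= x /\ g x < t).
have HbE : bound E.
  exists b => x [->|[Hx1 Hx2]]; first lra.
  apply Rnot_lt_le => Hx; have := Hm b x; lra.
have HnE : exists x, E x by exists a; left.
have [l Hl] := completeness E HbE HnE.
have Hal : a <= l by apply (proj1 Hl); left.
have Hlb : l <= b.
  apply (proj2 Hl) => x [->|[Hx1 Hx2]]; first lra.
  apply Rnot_lt_le => Hx; have := Hm b x; lra.
have Key : forall x, a <= x < l -> g x < t.
  move=> x Hx; apply Rnot_le_lt => Hgx.
  have : l <= x; last lra.
  apply (proj2 Hl) => e [->|[He1 He2]]; first lra.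
  apply Rnot_lt_le => Hex; have := Hm x e; lra.
exists l; split; first lra; split => //.
destruct (Rtotal_order (g l) t) as [Hlt|[Heq|Hgt]] => //.
- have [d [Hd Hd']] := Hc l ltac:(lra) (t - g l) ltac:(lra).
  have Hy := Hd' (l + d/2) ltac:(lra).
  rewrite Rabs_right in Hy; last lra.
  have Hy2 : Rabs (g (l + d / 2) - g l) < t - g l by apply Hy; lra.
  have EE : E (l + d/2).
    right; split; first lra.
    move: Hy2; rewrite /Rabs; destruct (Rcase_abs _); lra.
  have := proj1 Hl _ EE; lra.
- have [d [Hd Hd']] := Hc l ltac:(lra) (g l - t) ltac:(lra).
  destruct (Req_dec l a) as [Hla|Hla].
    subst l; lra.
  pose y := Rmax a (l - d/2).
  have Hy1 : a <= y by apply Rmax_l.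
  have Hy2 : l - d/2 <= y by apply Rmax_r.
  have Hy3 : y < l by apply Rmax_lub_lt; lra.
  have Hgy := Key y ltac:(lra).
  have Hy := Hd' y ltac:(lra).
  have Hy4 : Rabs (g y - g l) < g l - t.
    apply Hy; rewrite /Rabs; destruct (Rcase_abs _); lra.
  move: Hy4; rewrite /Rabs; destruct (Rcase_abs _); lra.
Qed.

Lemma upper_pt g l t : nondecr_nonneg g -> cont_nonneg g -> 0 <= l -> g l = t ->
  (forall x, l <= x -> g x = t) \/
  exists u, l <= u /\ g u = t /\ forall x, u < x -> t < g x.
Proof.
move=> Hm Hc Hl Hgl.
destruct (classic (exists b, l <= b /\ t < g b)) as [[b [Hb1 Hb2]]|Hn]; last first.
  left => x Hx; have := Hm l x Hl Hx.
  destruct (Rle_lt_dec (g x) t) as [H|H]; first lra.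
  exfalso; apply Hn; exists x; split => //.
right.
pose E := fun x => l <= x /\ g x <= t.
have HbE : bound E.
  exists b => x [Hx1 Hx2].
  apply Rnot_lt_le => Hx; have := Hm b x; lra.
have HnE : exists x, E x by exists l; split; lra.
have [u Hu] := completeness E HbE HnE.
have Hlu : l <= u by apply (proj1 Hu); split; lra.
have Key : forall x, u < x -> t < g x.
  move=> x Hx; apply Rnot_le_lt => Hgx.
  have Ex : E x by split; lra.
  have := proj1 Hu x Ex; lra.
exists u; split => //; split => //.
have Hge : t <= g u by rewrite -Hgl; apply Hm.
destruct (Rle_lt_or_eq_dec _ _ Hge) as [Hgt|]; last by [].
have [d [Hd Hd']] := Hc u ltac:(lra) (g u - t) ltac:(lra).
have [e [[He1 He2] He3]] := lub_approx _ _ Hu (d/2) ltac:(lra).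
have Heu : e <= u by apply (proj1 Hu); split.
have Hy := Hd' e ltac:(lra).
have Hy4 : Rabs (g e - g u) < g u - t.
  apply Hy; rewrite /Rabs; destruct (Rcase_abs _); lra.
move: Hy4; rewrite /Rabs; destruct (Rcase_abs _); lra.
Qed.

Section Sums.
Variable I : finType.

Lemma bsum_nonneg (P : pred I) (F : I -> R) :
  (forall i, P i -> 0 <= F i) -> 0 <= \big[Rplus/0]_(i | P i) F i.
Proof.
move=> H; apply (big_ind (fun x => 0 <= x)); [lra| move=> x y; lra | exact H].
Qed.

Lemma bsum_le (P : pred I) (F G : I -> R) :
  (forall i, P i -> F i <= G i) ->
  \big[Rplus/0]_(i | P i) F i <= \big[Rplus/0]_(i | P i) G i.
Proof.
move=> H; apply (big_ind2 (fun x y => x <= y)); [lra| move=> x1 x2 y1 y2; lra | exact H].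
Qed.

Lemma bsum_scal (P : pred I) (F : I -> R) a :
  \big[Rplus/0]_(i | P i) (a * F i) = a * \big[Rplus/0]_(i | P i) F i.
Proof.
apply (big_ind2 (fun x y => x = a * y)); [ring| move=> x1 x2 y1 y2 -> ->; ring | done].
Qed.

Lemma bsum_plus (P : pred I) (F G : I -> R) :
  \big[Rplus/0]_(i | P i) (F i + G i) =
  \big[Rplus/0]_(i | P i) F i + \big[Rplus/0]_(i | P i) G i.
Proof. exact: big_split. Qed.

Lemma bsum_const (S : {set I}) c :
  \big[Rplus/0]_(i in S) c = INR #|S| * c.
Proof.
rewrite big_const; elim: #|S| => [|k IH] /=; first ring.
rewrite IH; case: k {IH} => [|k] /=; ring.
Qed.

Lemma bsum_single (P : pred I) (F : I -> R) j :
  P j -> (forall i, P i -> 0 <= F i) -> F j <= \big[Rplus/0]_(i | P i) F i.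
Proof.
move=> Pj H; rewrite (bigD1 j) //=.
have := bsum_nonneg (fun i => P i && (i != j)) F.
have H' : forall i, P i && (i != j) -> 0 <= F i by move=> i /andP [] /H.
move/(_ H'); lra.
Qed.

Lemma bsum_strict (P : pred I) (F G : I -> R) j :
  P j -> (forall i, P i -> F i <= G i) -> F j < G j ->
  \big[Rplus/0]_(i | P i) F i < \big[Rplus/0]_(i | P i) G i.
Proof.
move=> Pj H Hj; rewrite (bigD1 j) // [X in _ < X](bigD1 j) //=.
have := bsum_le (fun i => P i && (i != j)) F G.
have H' : forall i, P i && (i != j) -> F i <= G i by move=> i /andP [] /H.
move/(_ H'); lra.
Qed.

Lemma bsum_sub (P P1 : pred I) (F : I -> R) :
  (forall i, P1 i -> P i) -> (forall i, P i -> 0 <= F i) ->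
  \big[Rplus/0]_(i | P1 i) F i <= \big[Rplus/0]_(i | P i) F i.
Proof.
move=> H1 H; rewrite (bigID P1 P) /=.
have -> : \big[Rplus/0]_(i | P i && P1 i) F i = \big[Rplus/0]_(i | P1 i) F i.
  apply: eq_bigl => i; case E: (P1 i); rewrite ?andbT ?andbF //; exact: H1.
have := bsum_nonneg (fun i => P i && ~~ P1 i) F.
have H' : forall i, P i && ~~ P1 i -> 0 <= F i by move=> i /andP [] /H.
move/(_ H'); lra.
Qed.

Lemma bsum_disj (P P1 P2 : pred I) (F : I -> R) :
  (forall i, P1 i -> P i) -> (forall i, P2 i -> P i) -> (forall i, P1 i -> P2 i -> False) ->
  (forall i, P i -> 0 <= F i) ->
  \big[Rplus/0]_(i | P1 i) F i + \big[Rplus/0]_(i | P2 i) F i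
    <= \big[Rplus/0]_(i | P i) F i.
Proof.
move=> H1 H2 Hd H; rewrite (bigID P1 P) /=.
have -> : \big[Rplus/0]_(i | P i && P1 i) F i = \big[Rplus/0]_(i | P1 i) F i.
  apply: eq_bigl => i; case E: (P1 i); rewrite ?andbT ?andbF //; exact: H1.
have : \big[Rplus/0]_(i | P2 i) F i <= \big[Rplus/0]_(i | P i && ~~ P1 i) F i.
  apply: bsum_sub.
    move=> i Hi; rewrite H2 //=; apply/negP => Hi1; exact: Hd Hi1 Hi.
  by move=> i /andP [] /H.
lra.
Qed.

Lemma fin_delta_seq (s : seq I) (Q : I -> R -> Prop) :
  (forall k, k \in s -> exists d, 0 < d /\ forall e, 0 < e <= d -> Q k e) ->
  exists d, 0 < d /\ forall k, k \in s -> forall e, 0 < e <= d -> Q k e.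
Proof.
elim: s => [|x s IH] H.
  by exists 1; split; [lra|].
have [d1 [Hd1 H1]] := H x (mem_head _ _).
have [d2 [Hd2 H2]] : exists d, 0 < d /\ forall k, k \in s -> forall e, 0 < e <= d -> Q k e.
  by apply IH => k Hk; apply H; rewrite in_cons Hk orbT.
exists (Rmin d1 d2); split; first by apply Rmin_glb_lt.
move=> k; rewrite in_cons => /orP [/eqP ->|Hk] e He.
  apply H1; have := Rmin_l d1 d2; lra.
apply H2 => //; have := Rmin_r d1 d2; lra.
Qed.

Lemma fin_delta (S : {set I}) (Q : I -> R -> Prop) :
  (forall k, k \in S -> exists d, 0 < d /\ forall e, 0 < e <= d -> Q k e) ->
  exists d, 0 < d /\ forall k, k \in S -> Q k d.
Proof.
move=> H; have [d [Hd H']] := @fin_delta_seq (enum S) Q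
  ltac:(by move=> k; rewrite mem_enum; apply H).
exists d; split => // k Hk; apply H' ; [by rewrite mem_enum| lra].
Qed.
End Sums.
Arguments bsum_nonneg {I}.
Arguments bsum_le {I}.
Arguments bsum_scal {I}.
Arguments bsum_plus {I}.
Arguments bsum_const {I}.
Arguments bsum_single {I}.
Arguments bsum_strict {I}.
Arguments bsum_sub {I}.
Arguments bsum_disj {I}.
Arguments fin_delta_seq {I}.
Arguments fin_delta {I}.
Lemma fchoiceS (I : finType) (B : Type) (b0 : B) (S : {set I}) (P : I -> B -> Prop) :
  (forall k, k \in S -> exists x, P k x) -> exists g, forall k, k \in S -> P k (g k).
Proof.
move=> H.
have H' : forall k, exists x, k \in S -> P k x.
  move=> k; case Hk: (k \in S); last by exists b0.
  by have [x Hx] := H k Hk; exists x.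
have [g Hg] := @fchoice _ _ (fun k x => k \in S -> P k x) H'.
by exists g.
Qed.

Section G.
Variable n : nat.
Variable f : 'I_n -> R -> R.
Variable mu : {set 'I_n} -> R.
Hypothesis f_mono : forall j, nondecr_nonneg (f j).
Hypothesis f_cont : forall j, cont_nonneg (f j).
Hypothesis mu_nonneg : forall T : {set 'I_n}, T != set0 -> 0 <= mu T.

Lemma meet_ne0 (T X : {set 'I_n}) : T :&: X != set0 -> T != set0.
Proof.
move=> /set0Pn [x]; rewrite in_setI => /andP [Hx _]; apply/set0Pn; by exists x.
Qed.

Lemma meet_ne (T X Y : {set 'I_n}) : X \subset Y -> T :&: X != set0 -> T :&: Y != set0.
Proof.
move=> /subsetP H /set0Pn [x]; rewrite in_setI => /andP [Hx HX]; apply/set0Pn; exists x.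
by rewrite in_setI Hx H.
Qed.

Lemma dm_nonneg S S' : 0 <= demand_meet mu S S'.
Proof. apply bsum_nonneg => T /andP [_ H]; apply mu_nonneg; exact: meet_ne0 H. Qed.

Lemma demand0 : demand mu set0 = 0.
Proof.
rewrite /demand big1 // => T /andP [H1 H2]; exfalso; move: H2; rewrite subset0.
by move/negP: H1.
Qed.

Lemma demand_split S S' : demand mu S = demand mu (S :\: S') + demand_meet mu S S'.
Proof.
rewrite /demand (bigID (fun T => T :&: S' != set0)) /= Rplus_comm; congr Rplus.
  apply: eq_bigl => T; by rewrite subsetD -setI_eq0 negbK andbA.
apply: eq_bigl => T; case h: (T :&: S' != set0); rewrite ?andbT ?andbF //.
by rewrite (meet_ne0 _ _ h).
Qed.

Lemma demand_meet_self S : demand_meet mu S S = demand mu S.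
Proof.
apply: eq_bigl => T; case h: (T \subset S); rewrite ?andbT ?andbF //=.
by rewrite (setIidPl h).
Qed.

Lemma EqVal_lt S m c c' : S != set0 -> EqVal f S m c -> EqVal f S m c' -> c < c' -> False.
Proof.
move=> /set0Pn [j Hj] [x [Hx0 [Hxs Hxf]]] [y [Hy0 [Hys Hyf]]] Hlt.
have H : forall k, k \in S -> x k < y k.
  move=> k Hk; apply Rnot_le_lt => Hle.
  have := f_mono k (y k) (x k) (Hy0 k Hk) Hle; rewrite Hxf // Hyf //; lra.
have := bsum_strict (fun k => k \in S) x y j Hj (fun k Hk => Rlt_le _ _ (H k Hk)) (H j Hj).
lra.
Qed.

Lemma EqVal_uniq S m c c' : S != set0 -> EqVal f S m c -> EqVal f S m c' -> c = c'.
Proof.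
move=> HS H1 H2; destruct (Rtotal_order c c') as [h|[h|h]] => //; exfalso.
  exact: EqVal_lt HS H1 H2 h.
exact: EqVal_lt HS H2 H1 h.
Qed.

Lemma EqVal_intro (S : {set 'I_n}) m c (x : 'I_n -> R) :
  (forall k, k \in S -> 0 <= x k /\ f k (x k) = c) ->
  \big[Rplus/0]_(k in S) x k = m -> EqVal f S m c.
Proof.
move=> H Hs; exists x; split; [move=> k Hk; exact (proj1 (H k Hk))|split].
  exact Hs.
move=> k Hk; exact (proj2 (H k Hk)).
Qed.

Lemma small_eps a N : 0 < a -> 0 <= N -> exists e, 0 < e /\ N * e < a.
Proof.
move=> Ha HN; exists (a / (N + 1)); split.
  apply Rdiv_lt_0_compat; lra.
have E : a / (N + 1) * (N + 1) = a by field; lra.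
have -> : N * (a / (N + 1)) = a / (N + 1) * (N + 1) - a / (N + 1) by ring.
rewrite E; have : 0 < a / (N + 1) by apply Rdiv_lt_0_compat; lra.
lra.
Qed.

Lemma reach S (y : 'I_n -> R) c m : S != set0 ->
  (forall k, k \in S -> 0 <= y k /\ f k (y k) = c) ->
  \big[Rplus/0]_(k in S) y k <= m ->
  exists c', c <= c' /\ EqVal f S m c'.
Proof.
move=> HS Hy Hym.
have [k0 Hk0] := set0Pn _ HS.
have HN : 0 <= INR #|S| by apply pos_INR.
have Hm0 : 0 <= m.
  have := bsum_nonneg (fun k => k \in S) y (fun k Hk => proj1 (Hy k Hk)); lra.
pose T := fun t => c <= t /\ exists x : 'I_n -> R,
  (forall k, k \in S -> 0 <= x k /\ f k (x k) = t) /\ \big[Rplus/0]_(k in S) x k <= m.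
have Tbnd : forall t k, T t -> k \in S -> t <= f k m.
  move=> t k [_ [x [Hx Hs]]] Hk.
  have := bsum_single (fun k => k \in S) x k Hk (fun i Hi => proj1 (Hx i Hi)).
  move=> Hxk; have [Hx0 <-] := Hx k Hk; apply f_mono => //; lra.
have HbT : bound T by exists (f k0 m) => t Ht; exact: Tbnd t k0 Ht Hk0.
have Tc : T c by split; [lra| exists y; split].
have HnT : exists t, T t by exists c.
have [ts Hts] := completeness T HbT HnT.
have Hcts : c <= ts := proj1 Hts c Tc.
have Htsm : forall k, k \in S -> ts <= f k m.
  move=> k Hk; apply (proj2 Hts) => t Ht; exact: Tbnd t k Ht Hk.
destruct (@fchoiceS _ _ 0 S (fun k lk =>
    0 <= lk <= m /\ f k lk = ts /\ forall x, 0 <= x < lk -> f k x < ts)) as [l Hlp].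
{ move=> k Hk.
  have Hf0 : f k 0 <= ts.
    have [Hyk0 Hyk] := Hy k Hk; have := f_mono k 0 (y k) (Rle_refl 0) Hyk0; lra.
  have [l Hl] := lower_pt (f k) 0 m ts (f_mono k) (f_cont k) (Rle_refl 0) Hm0 Hf0 (Htsm k Hk).
  by exists l.
}
have Hsl : \big[Rplus/0]_(k in S) l k <= m.
  apply Rnot_lt_le => Hlt.
  have [eps [Heps HepsK]] := small_eps (\big[Rplus/0]_(k in S) l k - m) (INR #|S|) ltac:(lra) HN.
  destruct (fin_delta S (fun k d => forall t x, ts - d < t -> 0 <= x -> f k x = t -> l k - eps <= x)) as [d [Hd Hdk]].
  { move=> k Hk.
    have [[Hl0 Hlm] [Hfl Hlow]] := Hlp k Hk.
    destruct (Rlt_le_dec (l k - eps) 0) as [Hneg|Hpos].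
      exists 1; split; [lra| move=> e He t x _ Hx _; lra].
    have Hfe := Hlow (l k - eps) ltac:(lra).
    exists (ts - f k (l k - eps)); split; first lra.
    move=> e He t x Ht Hx Hfx; apply Rnot_lt_le => Hxl.
    have := f_mono k x (l k - eps) Hx ltac:(lra); lra.
  }
  have [t [Tt Htd]] := lub_approx T ts Hts d Hd.
  destruct Tt as [_ [x [Hx Hxs]]].
  have : \big[Rplus/0]_(k in S) l k <= \big[Rplus/0]_(k in S) (x k + eps).
    apply bsum_le => k Hk; have [Hx0 Hxf] := Hx k Hk.
    have := Hdk k Hk t (x k) Htd Hx0 Hxf; lra.
  rewrite bsum_plus bsum_const; lra.
have [z [Hz Hzs]] : exists z : 'I_n -> R,
    (forall k, k \in S -> 0 <= z k /\ f k (z k) = ts) /\ m <= \big[Rplus/0]_(k in S) z k.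
  destruct (classic (exists k, k \in S /\ forall x, l k <= x -> f k x = ts)) as [[k1 [Hk1 Hfl]]|Hn].
    exists (fun k => if k == k1 then l k + m else l k); split.
      move=> k Hk; case: eqP => [->|_].
        have := Hlp k1 Hk1; split; [lra| apply Hfl; lra].
      have := Hlp k Hk; split; lra.
    have := bsum_single (fun k => k \in S) (fun k => if k == k1 then l k + m else l k) k1 Hk1.
    rewrite eqxx; move=> H; apply: Rle_trans (H _).
      have := Hlp k1 Hk1; lra.
    move=> i Hi; case: (i == k1); have := Hlp i Hi; lra.
  destruct (@fchoiceS _ _ 0 S (fun k uk =>
      l k <= uk /\ f k uk = ts /\ forall x, uk < x -> ts < f k x)) as [u Hup].
  { move=> k Hk.
    have [[Hl0 _] [Hfl _]] := Hlp k Hk.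
    destruct (upper_pt (f k) (l k) ts (f_mono k) (f_cont k) Hl0 Hfl) as [H|[u Hu]].
      exfalso; apply Hn; exists k; split => //.
    by exists u.
  }
  destruct (Rle_lt_dec m (\big[Rplus/0]_(k in S) u k)) as [Hle|Hlt].
    exists u; split => // k Hk; have := Hup k Hk; have := Hlp k Hk; split; lra.
  exfalso.
  have [eps [Heps HepsK]] := small_eps (m - \big[Rplus/0]_(k in S) u k) (INR #|S|) ltac:(lra) HN.
  destruct (fin_delta S (fun k d => ts + d <= f k (u k + eps))) as [d [Hd Hdk]].
  { move=> k Hk.
    have [_ [_ Hgt]] := Hup k Hk.
    have := Hgt (u k + eps) ltac:(lra).
    exists (f k (u k + eps) - ts); split; [lra| move=> e He; lra].
  }
  destruct (@fchoiceS _ _ 0 S (fun k xk =>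
      u k <= xk <= u k + eps /\ f k xk = ts + d)) as [x Hxp].
  { move=> k Hk.
    have [Hlu [Hfu _]] := Hup k Hk.
    have [[Hl0 _] _] := Hlp k Hk.
    have [x [Hx1 [Hx2 _]]] := lower_pt (f k) (u k) (u k + eps) (ts + d) (f_mono k) (f_cont k)
      ltac:(lra) ltac:(lra) ltac:(lra) (Hdk k Hk).
    by exists x.
  }
  have Tx : T (ts + d).
    split; first lra.
    exists x; split.
      move=> k Hk; have := Hxp k Hk; have := Hup k Hk; have := Hlp k Hk; split; lra.
    have : \big[Rplus/0]_(k in S) x k <= \big[Rplus/0]_(k in S) (u k + eps).
      apply bsum_le => k Hk; have := Hxp k Hk; lra.
    rewrite bsum_plus bsum_const; lra.
  have := proj1 Hts _ Tx; lra.
exists ts; split => //.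
have Hlz : forall k, k \in S -> l k <= z k.
  move=> k Hk; apply Rnot_lt_le => Hzl; have [Hz0 Hzf] := Hz k Hk.
  have [_ [_ Hlow]] := Hlp k Hk; have := Hlow (z k) ltac:(lra); lra.
destruct (Req_dec (\big[Rplus/0]_(k in S) z k) (\big[Rplus/0]_(k in S) l k)) as [Heq|Hne].
  apply (EqVal_intro _ _ _ l); last by apply Rle_antisym; [exact Hsl| rewrite -Heq; exact Hzs].
  by move=> k Hk; have [[H0 _] [H1 _]] := Hlp k Hk.
set SL := \big[Rplus/0]_(k in S) l k in Hsl Hne *.
set SZ := \big[Rplus/0]_(k in S) z k in Hzs Hne *.
have Hd : SL < SZ by lra.
pose lam := (m - SL) / (SZ - SL).
have Hlam0 : 0 <= lam by rewrite /lam /Rdiv; apply Rmult_le_pos; [lra| apply Rlt_le, Rinv_0_lt_compat; lra].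
have Hlam1 : lam <= 1.
  rewrite /lam; apply (Rmult_le_reg_r (SZ - SL)); first lra.
  field_simplify; lra.
apply (EqVal_intro _ _ _ (fun k => l k + lam * (z k - l k))).
  move=> k Hk; have [[Hl0 _] [Hfl _]] := Hlp k Hk; have [Hz0 Hzf] := Hz k Hk.
  have Hlzk := Hlz k Hk.
  have H1 : 0 <= lam * (z k - l k) by apply Rmult_le_pos; lra.
  have H2 : lam * (z k - l k) <= z k - l k.
    have : (1 - lam) * (z k - l k) >= 0 by apply Rle_ge, Rmult_le_pos; lra.
    lra.
  split; first lra.
  have := f_mono k (l k) (l k + lam * (z k - l k)) Hl0 ltac:(lra).
  have := f_mono k (l k + lam * (z k - l k)) (z k) ltac:(lra) ltac:(lra).
  lra.
have Hdiff : \big[Rplus/0]_(k in S) (z k - l k) + SL = SZ.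
  rewrite /SL /SZ -bsum_plus; apply eq_bigr => k _; ring.
rewrite bsum_plus bsum_scal.
have -> : \big[Rplus/0]_(k in S) (z k - l k) = SZ - SL by lra.
rewrite -/SL /lam; field; lra.
Qed.

Lemma sum_splitS (S S' : {set 'I_n}) (x : 'I_n -> R) : S' \subset S ->
  \big[Rplus/0]_(k in S) x k =
  \big[Rplus/0]_(k in S') x k + \big[Rplus/0]_(k in S :\: S') x k.
Proof.
move=> /subsetP Hsub; rewrite (bigID (fun k => k \in S')) /=; congr Rplus.
  apply: eq_bigl => k; case h: (k \in S'); rewrite ?andbT ?andbF //.
  exact: Hsub.
apply: eq_bigl => k; by rewrite in_setD andbC.
Qed.

Lemma descent k : forall (S : {set 'I_n}) c, (#|S| <= k)%nat -> S != set0 -> EG f mu S c ->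
  exists S2 c2, inD f mu S2 /\ EG f mu S2 c2 /\ c <= c2.
Proof.
elim: k => [|k IH] S c Hk HS HE.
  by move: HS; rewrite -card_gt0; move: Hk; case: #|S|.
destruct (classic (forall S', ~ inM f mu S c S')) as [Hno|Hyes].
  exists S, c; split; last by split; [|lra].
  by split => //; exists c; split.
have [S' HS'] := not_all_ex_not _ _ Hyes.
have [S'ne [S'sub Hno]] := NNPP _ HS'.
have [x [Hx0 [Hxs Hxf]]] := HE.
pose m' := \big[Rplus/0]_(k in S') x k.
have HEq' : EqVal f S' m' c.
  apply (EqVal_intro _ _ _ x) => // j Hj; have Hj' := subsetP S'sub j Hj.
  by split; [apply Hx0|apply Hxf].
have Hm'0 : 0 <= m'.
  apply bsum_nonneg => j Hj; apply Hx0; exact: subsetP S'sub j Hj.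
have Hm' : demand_meet mu S S' < m'.
  apply Rnot_le_lt => Hle; exact: Hno m' (conj Hm'0 Hle) HEq'.
have Hsplit := sum_splitS S S' x S'sub.
have Hdsplit := demand_split S S'.
have Hlt : \big[Rplus/0]_(k in S :\: S') x k < demand mu (S :\: S').
  have E : \big[Rplus/0]_(k in S) x k = demand mu S by exact Hxs.
  rewrite -/m' in Hsplit; lra.
have HS2 : S :\: S' != set0.
  apply/negP => /eqP H0; move: Hlt; rewrite H0 demand0 big_set0; lra.
destruct (reach (S :\: S') x c (demand mu (S :\: S')) HS2) as [c' [Hcc' HE']].
- move=> j; rewrite in_setD => /andP [_ Hj]; split; [apply Hx0|apply Hxf] => //.
- exact: Rlt_le.
have Hcard : (#|S :\: S'| <= k)%nat.
  have := cardsID S' S; rewrite (setIidPr S'sub).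
  move: S'ne; rewrite -card_gt0 => H1 H2; move: Hk; rewrite -H2.
  move: H1; case: #|S'| => // p _; rewrite addSn ltnS => H3.
  exact: leq_trans (leq_addl _ _) H3.
have [S2 [c2 [HD [HE2 Hc2]]]] := IH (S :\: S') c' Hcard HS2 HE'.
exists S2, c2; split => //; split => //; lra.
Qed.

Lemma union_cover h (P : {set 'I_n}) : is_PG f mu h P ->
  forall k (S' : {set 'I_n}), (#|S'| <= k)%nat -> S' \subset P ->
  exists z : 'I_n -> R, (forall j, j \in S' -> 0 <= z j /\ f j (z j) = h) /\
    \big[Rplus/0]_(j in S') z j <= demand_meet mu P S'.
Proof.
move=> HP; elim=> [|k IH] S' Hk Hsub.
  have -> : S' = set0 by apply/eqP; rewrite -cards_eq0; move: Hk; case: #|S'|.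
  exists (fun _ => 0); split; first by move=> j; rewrite in_set0.
  rewrite big_set0; exact: dm_nonneg.
have [->|HS'] := eqVneq S' set0.
  exists (fun _ => 0); split; first by move=> j; rewrite in_set0.
  rewrite big_set0; exact: dm_nonneg.
have [j Hj] := set0Pn _ HS'.
have [S1 [HD1 [HE1 Hj1]]] := (proj1 (HP j)) (subsetP Hsub j Hj).
have [S1ne [c [HEc Hno1]]] := HD1.
have Hch : c = h by exact: EqVal_uniq S1ne HEc HE1.
subst c.
have HS1P : S1 \subset P.
  apply/subsetP => i Hi; apply (proj2 (HP i)); by exists S1.
pose A := S' :&: S1.
pose B := S' :\: S1.
have HA : A != set0 by apply/set0Pn; exists j; rewrite in_setI Hj Hj1.
have [m [Hm HEA]] : exists m, (0 <= m <= demand_meet mu S1 A) /\ EqVal f A m h.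
  apply NNPP => Hn; apply (Hno1 A); split => //; split; first exact: subsetIr.
  move=> m Hm HE; apply Hn; by exists m.
have [z1 [Hz10 [Hz1s Hz1f]]] := HEA.
have HBc : (#|B| <= k)%nat.
  have := cardsID S1 S'; rewrite -/A -/B.
  move: HA; rewrite -card_gt0 => H1 H2; move: Hk; rewrite -H2.
  move: H1; case: #|A| => // p _; rewrite addSn ltnS => H3.
  exact: leq_trans (leq_addl _ _) H3.
have HBP : B \subset P by exact: subset_trans (subsetDl _ _) Hsub.
have [z2 [Hz2 Hz2s]] := IH B HBc HBP.
exists (fun i => if i \in S1 then z1 i else z2 i); split.
  move=> i Hi; case Hi1: (i \in S1).
    have HiA : i \in A by rewrite in_setI Hi Hi1.
    split; [exact: Hz10|exact: Hz1f].
  apply Hz2; by rewrite in_setD Hi Hi1.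
rewrite (bigID (fun i => i \in S1)) /=.
have -> : \big[Rplus/0]_(i | (i \in S') && (i \in S1)) (if i \in S1 then z1 i else z2 i) =
          \big[Rplus/0]_(i in A) z1 i.
  apply: eq_big => i; first by rewrite in_setI.
  by move=> /andP [_ ->].
have -> : \big[Rplus/0]_(i | (i \in S') && ~~ (i \in S1)) (if i \in S1 then z1 i else z2 i) =
          \big[Rplus/0]_(i in B) z2 i.
  apply: eq_big => i; first by rewrite in_setD andbC.
  by move=> /andP [_ /negbTE ->].
have Hs1 : \big[Rplus/0]_(i in A) z1 i = m by exact Hz1s.
rewrite Hs1.
apply Rle_trans with (demand_meet mu S1 A + demand_meet mu P B); first lra.
apply: bsum_disj.
- move=> T /andP [HT1 HTA]; rewrite (subset_trans HT1 HS1P) /=.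
  exact: meet_ne (subsetIl _ _) HTA.
- move=> T /andP [HT1 HTB]; rewrite HT1 /=.
  exact: meet_ne (subsetDl _ _) HTB.
- move=> T /andP [HT1 HTA] /andP [_ HTB].
  have [x Hx] := set0Pn _ HTB; move: Hx; rewrite in_setI in_setD => /andP [HxT /andP [Hx1 _]].
  by move: Hx1; rewrite (subsetP HT1 x HxT).
- move=> T /andP [_ HT]; apply mu_nonneg; exact: meet_ne0 HT.
Qed.

End G.

Local Close Scope R_scope.
Theorem mainTheorem18 (n : nat) (hn : (0 < n)%N)
  (f : 'I_n -> R -> R) (mu : {set 'I_n} -> R)
  (f_mono : forall j, nondecr_nonneg (f j))
  (f_cont : forall j, cont_nonneg (f j))
  (mu_nonneg : forall T : {set 'I_n}, T != set0 -> (0 <= mu T)%R)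
  (h : R) (Hh : is_hG f mu h)
  (P : {set 'I_n}) (HP : is_PG f mu h P) :
  inD f mu P /\ EG f mu P h.
Proof.
have [[S0 [HS0D HS0E]] Hmax] := Hh.
have HPne : P != set0.
  have [j Hj] := set0Pn _ (proj1 HS0D).
  apply/set0Pn; exists j; apply (proj2 (HP j)); by exists S0.
have Hcov := @union_cover n f mu f_mono mu_nonneg h P HP.
have [zP [HzP HzPs]] := Hcov #|P| P (leqnn _) (subxx _).
rewrite (demand_meet_self n mu P) in HzPs.
have HEG : EG f mu P h.
  apply NNPP => Hn.
  have [c' [Hc' HE']] := @reach n f f_mono f_cont P zP h (demand mu P) HPne HzP HzPs.
  destruct (Req_dec c' h) as [->|Hne]; first by apply Hn.
  have [S2 [c2 [HD2 [HE2 Hc2]]]] := @descent n f mu f_mono f_cont _ P c' (leqnn _) HPne HE'.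
  have := Hmax S2 c2 HD2 HE2; lra.
split => //; split => //; exists h; split => //.
move=> S' [S'ne [S'sub Hno]].
have [z [Hz Hzs]] := Hcov #|S'| S' (leqnn _) S'sub.
apply (Hno (\big[Rplus/0%R]_(j in S') z j)).
  split => //; apply bsum_nonneg => j Hj; exact (proj1 (Hz j Hj)).
exact: (@EqVal_intro n f S' _ h z Hz erefl).
Qed.
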